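(* Suppose the zero-padding range is chosen so that $X[m,n]=0$ for $m<m_{\min}$ and $m>m_{\max}$ (i.e., $X[m,n]\neq 0$ only for $m_{\min}\le m\le m_{\max}$), where \[ m_{\min}\geq\Big\lceil Q-l_{\min}-1+b_{\max}\big((N-1)M-1\big)\Big\rceil,\qquad m_{\max}\leq\Big\lfloor M-Q-l_{\max}-b_{\max}(N-1)M\Big\rfloor . \] Then the delay-Doppler domain input-output relation simplifies to \[ Y[m,n]=\sum_{l=0}^{l_{\max}^{\prime}}\sum_{k=0}^{N-1}X[m-l,(n-k)_{N}]\,G_{l}(m,k), \] where \[ G_{l}(m,k)=\sum_{i=1}^{P}h_{i}\,e^{j2\pi\frac{k_{i}m}{NM}}\frac{1}{N}\sum_{\dot{n}=0}^{N-1}e^{-j2\pi\frac{\dot{n}(k-k_{i})}{N}}\,a\Big(\big(l-l_{i}+b_{i}(m+\dot{n}M)\big)T_{s}\Big). \]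
   Context: Consider a zero-padded (ZP) wideband ODDM system with $M$ multicarrier symbols and $N$ subcarriers per symbol, sampling period (delay resolution) $T_s$ and $T=MT_s$. Data $X[m,n]$ ($m=0,\dots,M-1$, $n=0,\dots,N-1$) is mapped by the normalized $N$-point IFFT $x[m,\dot n]=\frac{1}{\sqrt N}\sum_{n=0}^{N-1}X[m,n]e^{j2\pi n\dot n/N}$, and the transmit waveform is $s(t)=\sum_{m=0}^{M-1}\sum_{\dot n=0}^{N-1}x[m,\dot n]\,a(t-mT_s-\dot nT)$, where $a(t)$ is a truncated Nyquist pulse for symbol interval $T_s$ with $a(t)=0$ for $|t|\ge QT_s$ and $2Q\ll M$. The channel has $P$ paths; the baseband received signal is $r(t)=\sum_{i=1}^{P}h_i e^{j2\pi\nu_i t}s\big(t-(\tau_i-b_it)\big)$ with complex gain $h_i$, delay $\tau_i=l_iT_s$, Doppler shift at the carrier $\nu_i=\frac{k_i}{NMT_s}$ ($l_i,k_i$ possibly non-integer), and Doppler scaling factor $b_i=\text{v}_i/c$ (path-length decrease speed over wave speed), with $|b_i|\le b_{\max}<1$ and $l_{\min}\le l_i\le l_{\max}$ ($l_{\min},l_{\max}$ integers). The receiver samples $y[m,\dot n]=r(mT_s+\dot nT)$ and computes $Y[m,n]=\frac{1}{\sqrt N}\sum_{\dot n=0}^{N-1}y[m,\dot n]e^{-j2\pi n\dot n/N}$. Synchronization is chosen so that the minimum equivalent delay tap is $0$, namely $l_{\min}=Q+\lfloor b_{\max}(NM-1)\rfloor$, and the maximum equivalent tap $l_{\max}^{\prime}=\lfloor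 l_{\max}+Q+b_{\max}(NM-1)\rfloor$ is assumed to satisfy $l_{\max}^{\prime}<M$. Noise is ignored. $(\cdot)_N$ denotes modulo $N$. *)

(* Defs.v *)
From HB Require Import structures.
From mathcomp Require Import all_boot all_order all_algebra.
From mathcomp Require Import reals trigo.
From mathcomp Require Import complex.
Set Implicit Arguments. Unset Strict Implicit. Unset Printing Implicit Defensive.
Import Order.TTheory GRing.Theory Num.Theory.
Local Open Scope ring_scope.

Section ODDM.
Variable R : realType.
Local Notation C := R[i].

Definition expj (th : R) : C := Complex (cos th) (sin th).

Definition rC (x : R) : C := Complex x 0.

Variables (M N : nat) (Ts : R).

Definition Tsym : R := M%:R * Ts.

Definition oddm_x (X : 'M[C]_(M, N)) (m : 'I_M) (nd : 'I_N) : C :=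
  rC (Num.sqrt N%:R)^-1 *
  \sum_(n < N) X m n * expj (2 * pi * (n%:R * nd%:R) / N%:R).

Definition oddm_s (a : R -> C) (X : 'M[C]_(M, N)) (t : R) : C :=
  \sum_(m < M) \sum_(nd < N)
     oddm_x X m nd * a (t - m%:R * Ts - nd%:R * Tsym).

(* received signal r(t) for P paths with gains h, (normalized) delays l,
   (normalized) Doppler k, Doppler scaling b:
   r(t) = sum_i h_i e^{j 2 pi nu_i t} s(t - (tau_i - b_i t)),
   tau_i = l_i Ts, nu_i = k_i / (N M Ts). *)
Definition oddm_r (P : nat) (h : 'I_P -> C) (l k b : 'I_P -> R)
  (a : R -> C) (X : 'M[C]_(M, N)) (t : R) : C :=
  \sum_(i < P) h i * expj (2 * pi * (k i / (N%:R * M%:R * Ts)) * t)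
     * oddm_s a X (t - (l i * Ts - b i * t)).

Definition oddm_y P h l k b a X (m : 'I_M) (nd : 'I_N) : C :=
  @oddm_r P h l k b a X (m%:R * Ts + nd%:R * Tsym).

Definition oddm_Y P h l k b a X (m : 'I_M) (n : 'I_N) : C :=
  rC (Num.sqrt N%:R)^-1 *
  \sum_(nd < N) @oddm_y P h l k b a X m nd
                  * expj (- (2 * pi * (n%:R * nd%:R) / N%:R)).

(* zero extension of the data grid to integer delay indices:
   X[m', n'] = 0 whenever m' is outside {0,..,M-1} (zero padding). *)
Definition Xz (X : 'M[C]_(M, N)) (m : int) (n : nat) : C :=
  match m with
  | Posz m' =>
      match insub m' : option 'I_M, insub n : option 'I_N with
      | Some i, Some j => X i j
      | _, _ => 0
      end
  | Negz _ => 0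
  end.

Definition oddm_G (P : nat) (h : 'I_P -> C) (l k b : 'I_P -> R)
  (a : R -> C) (ll : nat) (m : nat) (kk : nat) : C :=
  \sum_(i < P) h i * expj (2 * pi * (k i * m%:R) / (N%:R * M%:R))
    * (rC (N%:R)^-1 *
       \sum_(nd < N) expj (- (2 * pi * (nd%:R * (kk%:R - k i)) / N%:R))
                     * a ((ll%:R - l i + b i * (m%:R + nd%:R * M%:R)) * Ts)).

End ODDM.

(* Main.v *)
Require Import Defs.
From HB Require Import structures.
From mathcomp Require Import all_boot all_order all_algebra.
From mathcomp Require Import reals trigo.
From mathcomp Require Import complex.
From mathcomp Require Import ring lra zify.
Import Order.TTheory GRing.Theory Num.Theory.
Local Open Scope ring_scope.

Lemma expjD (R : realType) (x y : R) : expj (x + y) = expj x * expj y.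
Proof. rewrite /expj cosD sinD /=. congr Complex; lra. Qed.

Lemma expj2pin (R : realType) (x : R) (c : nat) : expj (x + 2 * pi * c%:R) = expj x.
Proof.
elim: c => [|c IH]; first by rewrite mulr0 addr0.
have -> : x + 2 * pi * c.+1%:R = (x + 2 * pi * c%:R) + pi *+ 2.
  by rewrite -natr1 mulr_natr; ring.
by rewrite -[RHS]IH /expj cosD2pi sinD2pi.
Qed.

Lemma rCM (R : realType) (x y : R) : rC (x * y) = rC x * rC y.
Proof. rewrite /rC /=. congr Complex; lra. Qed.

Lemma modinv (N n x : nat) : (n < N)%N -> (x < N)%N ->
  ((n + N - (n + N - x) %% N) %% N)%N = x.
Proof.
move=> hn hx; case: (leqP x n) => h.
  have -> : (n + N - x = N + (n - x))%N by lia.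
  have h1 : (n - x < N)%N by lia.
  rewrite modnDl (modn_small h1).
  have -> : (n + N - (n - x) = N + x)%N by lia.
  by rewrite modnDl modn_small.
have h1 : (n + N - x < N)%N by lia.
rewrite (modn_small h1).
have -> : (n + N - (n + N - x) = x)%N by lia.
by rewrite modn_small.
Qed.

Lemma modc (N n x : nat) : (n < N)%N -> (x < N)%N ->
  exists c : nat, ((n + N - x) %% N + x = n + N * c)%N.
Proof.
move=> hn hx; case: (leqP x n) => h.
  exists 0%N; have -> : (n + N - x = N + (n - x))%N by lia.
  have h1 : (n - x < N)%N by lia.
  rewrite modnDl (modn_small h1); lia.
exists 1%N; have h1 : (n + N - x < N)%N by lia.
rewrite (modn_small h1); lia.
Qed.

Lemma XzE (R : realType) M N (X : 'M[R[i]]_(M,N)) j (hj : (j < M)%N) (n' : 'I_N) :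
  Xz X (Posz j) n' = X (Ordinal hj) n'.
Proof. by rewrite /Xz (insubT (fun j => j < M)%N hj) valK. Qed.

Lemma Xz_sum (R : realType) M N (X : 'M[R[i]]_(M,N)) (m : 'I_M) (n' : 'I_N) K
  (g : nat -> R[i]) :
  \sum_(0 <= ll < K) Xz X (m%:Z - ll%:Z) n' * g ll =
  \sum_(m' < M) X m' n' * (if (m' <= m)%N && (m - m' < K)%N then g (m - m')%N else 0).
Proof.
have E1 : forall ll, Xz X (m%:Z - ll%:Z) n' =
    \sum_(m' < M) (if (m' + ll == m)%N then X m' n' else 0).
  move=> ll; case: (leqP ll m) => hl.
    have hj : (m - ll < M)%N by have := ltn_ord m; lia.
    rewrite subzn // XzE (bigD1 (Ordinal hj)) /=; last by apply/eqP; lia.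
    have -> : (m - ll + ll == m)%N by apply/eqP; lia.
    rewrite big1 ?addr0 // => j hjo; case: eqP => // e.
    exfalso; move/eqP: hjo; apply; apply: val_inj => /=; lia.
  rewrite big1; last by move=> j _; case: eqP => // e; lia.
  have : m%:Z - ll%:Z < 0 by rewrite subr_lt0 ltz_nat.
  by case: (m%:Z - ll%:Z).
under eq_bigr do rewrite E1 mulr_suml.
rewrite exchange_big /=; apply: eq_bigr => j _.
rewrite big_mkord.
case: ifP => /andP.
  case=> hjm hK; rewrite (bigD1 (Ordinal hK)) //=.
  have -> : (j + (m - j) == m)%N by apply/eqP; lia.
  rewrite big1 ?addr0 // => ll hll; case: eqP; rewrite ?mul0r // => e.
  exfalso; move/eqP: hll; apply; apply: val_inj => /=; lia.
move=> hn; rewrite mulr0 big1 // => ll _; case: eqP; rewrite ?mul0r // => e.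
exfalso; apply: hn; split; have := ltn_ord ll; lia.
Qed.

Theorem theorem2 (R : realType) (M N Q P : nat) (Ts : R)
  (a : R -> R[i]) (X : 'M[R[i]]_(M, N))
  (h : 'I_P -> R[i]) (l k b : 'I_P -> R)
  (bmax : R) (lmin lmax mmin mmax : int) :
  (0 < M)%N -> (0 < N)%N -> 0 < Ts ->
  (forall t : R, Q%:R * Ts <= `|t| -> a t = 0) ->
  0 <= bmax -> bmax < 1 -> (forall i, `|b i| <= bmax) ->
  (forall i, lmin%:~R <= l i <= lmax%:~R) ->
  lmin = Q%:Z + Num.floor (bmax * ((N * M)%:R - 1)) ->
  Num.floor (lmax%:~R + Q%:R + bmax * ((N * M)%:R - 1)) < M%:Z ->
  Num.ceil (Q%:R - lmin%:~R - 1 + bmax * ((N%:R - 1) * M%:R - 1)) <= mmin ->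
  mmax <= Num.floor (M%:R - Q%:R - lmax%:~R - bmax * ((N%:R - 1) * M%:R)) ->
  (forall (m : 'I_M) (n : 'I_N), ((m%:Z < mmin) || (mmax < m%:Z)) -> X m n = 0) ->
  forall (m : 'I_M) (n : 'I_N),
    oddm_Y Ts h l k b a X m n =
    \sum_(0 <= ll < `|Num.floor (lmax%:~R + Q%:R + bmax * ((N * M)%:R - 1))|.+1)
      \sum_(kk < N)
        Xz X (m%:Z - ll%:Z) ((n + N - kk) %% N) * oddm_G M N Ts h l k b a ll m kk.
Proof.
move=> M0 N0 Ts0 aQ b0 b1 bB lB lminE LM mminH mmaxH Xzero m n.
set F := Num.floor (lmax%:~R + Q%:R + bmax * ((N * M)%:R - 1)).
pose Gr (d : R) (kk : nat) : R[i] := \sum_(i < P) h i *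
   expj (2 * pi * (k i * m%:R) / (N%:R * M%:R))
    * (rC (N%:R)^-1 *
       \sum_(nd < N) expj (- (2 * pi * (nd%:R * (kk%:R - k i)) / N%:R))
                     * a ((d - l i + b i * (m%:R + nd%:R * M%:R)) * Ts)).
pose f (j : 'I_N) : 'I_N := Ordinal (ltn_pmod (n + N - j) N0).
have fK : forall j, f (f j) = j.
  by move=> j; apply: val_inj; rewrite /= modinv.
have finj : injective f by apply: (can_inj fK).
have aZ : forall u, Q%:R <= `|u| -> a (u * Ts) = 0.
  move=> u hu; apply: aQ; rewrite normrM (gtr0_norm Ts0).
  by rewrite ler_pM2r.
have Gr0 : forall d kk, (forall i (nd : 'I_N),
    Q%:R <= `|d - l i + b i * (m%:R + nd%:R * M%:R)|) -> Gr d kk = 0.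
  move=> d kk H; rewrite /Gr big1 // => i _.
  by rewrite big1 ?mulr0 // => nd _; rewrite aZ ?mulr0.
have bi : forall i, -bmax <= b i <= bmax by move=> i; rewrite -ler_norml bB.
have S0 : forall nd : 'I_N, 0 <= m%:R + nd%:R * M%:R :> R.
  by move=> nd; rewrite addr_ge0 // mulr_ge0.
have S1 : forall nd : 'I_N, m%:R + nd%:R * M%:R <= (N * M)%:R - 1 :> R.
  move=> nd; have h1 : (m + nd * M + 1 <= N * M)%N.
    have := ltn_ord m; have := ltn_ord nd; nia.
  move: h1; rewrite -(ler_nat R) !natrD !natrM ?mulr1n; lra.
have bS : forall i (nd : 'I_N), b i * (m%:R + nd%:R * M%:R) <= bmax * ((N * M)%:R - 1)
   /\ - (bmax * ((N * M)%:R - 1)) <= b i * (m%:R + nd%:R * M%:R).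
  move=> i nd; have /andP[bl bu] := bi i.
  have e1 : bmax * (m%:R + nd%:R * M%:R) <= bmax * ((N * M)%:R - 1).
    by rewrite ler_wpM2l.
  have e2 : b i * (m%:R + nd%:R * M%:R) <= bmax * (m%:R + nd%:R * M%:R).
    by rewrite ler_wpM2r.
  have e3 : - bmax * (m%:R + nd%:R * M%:R) <= b i * (m%:R + nd%:R * M%:R).
    by rewrite ler_wpM2r.
  split; lra.
have hfl := floor_itv (bmax * ((N * M)%:R - 1) : R).
rewrite intrD in hfl; have /andP[hfl1 hfl2] := hfl.
have e1 : (1%:~R : R) = 1 by [].
rewrite e1 in hfl2.
have hlmin : lmin%:~R = Q%:R + (Num.floor (bmax * ((N * M)%:R - 1) : R))%:~R :> R.
  by rewrite lminE intrD.
have hFx : F%:~R <= lmax%:~R + Q%:R + bmax * ((N * M)%:R - 1) :> R by apply: floor_le.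
have hFx2 : lmax%:~R + Q%:R + bmax * ((N * M)%:R - 1) < F%:~R + 1 :> R.
  by have /andP[_ +] := floor_itv (lmax%:~R + Q%:R + bmax * ((N * M)%:R - 1) : R); rewrite intrD.
have hF : F%:~R <= (`|F|%N)%:R :> R.
  have h0 : F <= (`|F|%N)%:Z by rewrite abszE ler_norm.
  by rewrite -[(`|F|%N)%:R]/((Posz `|F|%N)%:~R) ler_int.
transitivity (\sum_(m' < M) \sum_(n' < N) X m' n' * Gr (m%:R - m'%:R) (f n')).
  have hs : forall i (nd : 'I_N) t, t = m%:R * Ts + nd%:R * (M%:R * Ts) ->
    oddm_s Ts a X (t - (l i * Ts - b i * t)) =
    \sum_(m' < M) oddm_x X m' nd *
        a ((m%:R - m'%:R - l i + b i * (m%:R + nd%:R * M%:R)) * Ts).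
    move=> i nd t ->; rewrite /oddm_s /Tsym; apply: eq_bigr => m' _.
    rewrite (bigD1 nd) //= big1 ?addr0.
      by congr (_ * a _); ring.
    move=> nd' hnd.
    case: (boolP ((m'%:Z < mmin) || (mmax < m'%:Z))) => hX.
      by rewrite /oddm_x big1 ?mulr0 ?mul0r // => n0 _; rewrite Xzero // mul0r.
    set u := m%:R - m'%:R + (nd%:R - nd'%:R) * M%:R - l i + b i * (m%:R + nd%:R * M%:R).
    have -> : (m%:R * Ts + nd%:R * (M%:R * Ts) - (l i * Ts - b i * (m%:R * Ts + nd%:R * (M%:R * Ts)))
       - m'%:R * Ts - nd'%:R * (M%:R * Ts)) = u * Ts by rewrite /u; ring.
    rewrite aZ ?mulr0 //.
    move: hX; rewrite negb_or -!leNgt => /andP[h1 h2].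
    have r1 : mmin%:~R <= m'%:R :> R by rewrite -[m'%:R]/((Posz m')%:~R) ler_int.
    have r2 : m'%:R <= mmax%:~R :> R by rewrite -[m'%:R]/((Posz m')%:~R) ler_int.
    have r3 : mmax%:~R <= M%:R - Q%:R - lmax%:~R - bmax * ((N%:R - 1) * M%:R) :> R.
      by rewrite -floor_ge_int.
    have r4 : Q%:R - lmin%:~R - 1 + bmax * ((N%:R - 1) * M%:R - 1) <= mmin%:~R :> R.
      by rewrite -ceil_le_int.
    have /andP[bl bu] := bi i; have /andP[li1 li2] := lB i.
    have mM : m%:R + 1 <= M%:R :> R by rewrite natr1 ler_nat.
    have ndN : nd%:R + 1 <= N%:R :> R by rewrite natr1 ler_nat.
    have nd'N : nd'%:R + 1 <= N%:R :> R by rewrite natr1 ler_nat.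
    have m0 : 0 <= m%:R :> R by [].
    have ndM0 : 0 <= nd%:R * M%:R :> R by rewrite mulr_ge0.
    case: (ltngtP nd' nd) => hc; last by move: hnd; rewrite -val_eqE /= hc eqxx.
      have hd : nd'%:R + 1 <= nd%:R :> R by rewrite natr1 ler_nat.
      have p1 : 1 * M%:R <= (nd%:R - nd'%:R) * M%:R :> R by rewrite ler_wpM2r //; lra.
      have p2 : - bmax * m%:R <= b i * m%:R by rewrite ler_wpM2r.
      have p3 : bmax * m%:R <= 1 * m%:R by rewrite ler_wpM2r // ltW.
      have p4 : - bmax * (nd%:R * M%:R) <= b i * (nd%:R * M%:R) by rewrite ler_wpM2r.
      have p5 : bmax * (nd%:R * M%:R) <= bmax * ((N%:R - 1) * M%:R).
        by rewrite ler_wpM2l // ler_wpM2r //; lra.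
      rewrite ler_normr; apply/orP; left; rewrite /u; lra.
    have hd : nd%:R + 1 <= nd'%:R :> R by rewrite natr1 ler_nat.
    have p1 : (nd%:R - nd'%:R) * M%:R <= -1 * M%:R :> R by rewrite ler_wpM2r //; lra.
    have p2 : b i * m%:R <= bmax * m%:R by rewrite ler_wpM2r.
    have p3 : bmax * m%:R <= bmax * (M%:R - 1) by rewrite ler_wpM2l //; lra.
    have p4 : b i * (nd%:R * M%:R) <= bmax * (nd%:R * M%:R) by rewrite ler_wpM2r.
    have p5 : bmax * (nd%:R * M%:R) <= bmax * ((N%:R - 2) * M%:R).
      by rewrite ler_wpM2l // ler_wpM2r //; lra.
    rewrite ler_normr; apply/orP; right; rewrite /u; lra.
  rewrite /oddm_Y /oddm_y /oddm_r /Tsym.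
  under eq_bigr => nd _ do under eq_bigr => i _ do rewrite (hs i nd _ erefl).
  pose c := rC (Num.sqrt (N%:R : R))^-1.
  pose T (nd : 'I_N) (i : 'I_P) (m' : 'I_M) (n' : 'I_N) :=
    c * (h i * expj (2 * pi * (k i / (N%:R * M%:R * Ts)) * (m%:R * Ts + nd%:R * (M%:R * Ts)))
      * (c * (X m' n' * expj (2 * pi * (n'%:R * nd%:R) / N%:R)) *
         a ((m%:R - m'%:R - l i + b i * (m%:R + nd%:R * M%:R)) * Ts))
      * expj (- (2 * pi * (n%:R * nd%:R) / N%:R))).
  transitivity (\sum_(nd < N) \sum_(i < P) \sum_(m' < M) \sum_(n' < N) T nd i m' n').
    rewrite /oddm_x mulr_sumr; apply: eq_bigr => nd _.
    rewrite mulr_suml mulr_sumr; apply: eq_bigr => i _.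
    rewrite mulr_sumr mulr_suml mulr_sumr; apply: eq_bigr => m' _.
    rewrite mulr_sumr mulr_suml mulr_sumr mulr_suml mulr_sumr; apply: eq_bigr => n' _.
    by rewrite /T /c; ring.
  transitivity (\sum_(m' < M) \sum_(n' < N) \sum_(i < P) \sum_(nd < N) T nd i m' n').
    rewrite exchange_big /=.
    under eq_bigr => i _ do rewrite exchange_big /=.
    under eq_bigr => i _ do under eq_bigr => m' _ do rewrite exchange_big /=.
    rewrite exchange_big /=.
    by under eq_bigr => m' _ do rewrite exchange_big /=.
  apply: eq_bigr => m' _; apply: eq_bigr => n' _.
  rewrite /Gr mulr_sumr; apply: eq_bigr => i _.
  rewrite !mulr_sumr; apply: eq_bigr => nd _.
  have Nn0 : (N%:R : R) != 0 by rewrite pnatr_eq0 -lt0n.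
  have Mn0 : (M%:R : R) != 0 by rewrite pnatr_eq0 -lt0n.
  have Tsn0 : Ts != 0 by rewrite gt_eqF.
  have cc : c * c = rC (N%:R^-1).
    rewrite /c -rCM -invfM -expr2 sqr_sqrtr // ler0n.
  have eE : expj (2 * pi * (k i / (N%:R * M%:R * Ts)) * (m%:R * Ts + nd%:R * (M%:R * Ts)))
     = expj (2 * pi * (k i * m%:R) / (N%:R * M%:R)) * expj (2 * pi * (k i * nd%:R) / N%:R).
    rewrite -expjD; congr expj; field.
    by rewrite Nn0 Mn0 Tsn0.
  have [c0 hc0] := @modc N n n' (ltn_ord n) (ltn_ord n').
  have hc : (f n')%:R = n%:R + N%:R * c0%:R - n'%:R :> R.
    by rewrite /f /= -natrM -natrD -hc0 natrD addrK.
  have ph : expj (2 * pi * (k i * nd%:R) / N%:R) * expj (2 * pi * (n'%:R * nd%:R) / N%:R)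
     * expj (- (2 * pi * (n%:R * nd%:R) / N%:R))
     = expj (- (2 * pi * (nd%:R * ((f n')%:R - k i)) / N%:R)).
    rewrite -!expjD -[RHS](expj2pin _ _ (nd * c0)%N); congr expj.
    rewrite hc natrM; field.
    by rewrite Nn0.
  rewrite /T eE.
  transitivity ((c * c) * (X m' n' * (h i * expj (2 * pi * (k i * m%:R) / (N%:R * M%:R)) *
    ((expj (2 * pi * (k i * nd%:R) / N%:R) * expj (2 * pi * (n'%:R * nd%:R) / N%:R)
     * expj (- (2 * pi * (n%:R * nd%:R) / N%:R))) *
     a ((m%:R - m'%:R - l i + b i * (m%:R + nd%:R * M%:R)) * Ts))))).
    ring.
  rewrite cc ph; ring.
symmetry; rewrite exchange_big /= (reindex_inj finj) /=.
under eq_bigr => n' _.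
  rewrite modinv //.
  rewrite (@Xz_sum R M N X m n' _ (fun ll => Gr ll%:R ((n + N - n') %% N)%N)).
  over.
rewrite exchange_big /=; apply: eq_bigr => m' _; apply: eq_bigr => n' _.
congr (_ * _).
case: ifP => [/andP [hm hK] | hn].
  by rewrite natrB.
symmetry; apply: Gr0 => i nd.
have [bu bl] := bS i nd; have /andP[li1 li2] := lB i.
case: (leqP m' m) => hm.
  have : ((`|F|.+1)%:R <= (m - m')%:R :> R).
    by rewrite ler_nat; move: hn; rewrite hm /=; lia.
  rewrite natrB // -natr1 => hd.
  rewrite ler_normr; apply/orP; left; lra.
have hd : (m%:R + 1 <= m'%:R :> R) by rewrite natr1 ler_nat.
rewrite ler_normr; apply/orP; right; lra.
Qed.
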